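(* Let $\Gamma$ be the graph with vertex set $\{v_{n,k}: n\in\mathbb Z,\ k\in\mathbb Z/10\mathbb Z\}$ and edge set $\{v_{n,k}v_{n,k+1}: n\in\mathbb Z, k\in\mathbb Z/10\mathbb Z\}\cup\{v_{n,2k+1}v_{n+1,4k+2}: n\in\mathbb Z, k\in\mathbb Z/10\mathbb Z\}$. Then $\Gamma$ is a cubic (3-regular), 2-ended, vertex-transitive graph which is not a Cayley graph (i.e. no subgroup of $\mathrm{Aut}(\Gamma)$ acts regularly on $V(\Gamma)$). In particular, there exists a cubic 2-ended vertex-transitive graph which is not a Cayley graph.
   Context: Indices $k$ are taken modulo 10. A graph is 2-ended if it has exactly two ends (equivalently here, it is quasi-isometric to $\mathbb Z$). *)

(* Defs.v *)
From Stdlib Require List.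
From mathcomp Require Import all_boot all_order all_algebra.
Set Implicit Arguments. Unset Strict Implicit. Unset Printing Implicit Defensive.
Import GRing.Theory.
Local Open Scope ring_scope.

Section Generic.
Variables (V : Type) (adj : V -> V -> Prop).

Definition cubic : Prop :=
  forall v, exists a b c : V,
    [/\ a <> b, a <> c & b <> c] /\ [/\ adj v a, adj v b & adj v c] /\
    (forall w, adj v w -> w = a \/ w = b \/ w = c).

Inductive conn_avoid (S : V -> Prop) : V -> V -> Prop :=
| ca_refl x : ~ S x -> conn_avoid S x x
| ca_step x y z : conn_avoid S x y -> adj y z -> ~ S z -> conn_avoid S x z.

Definition connected_graph : Prop :=
  forall x y, conn_avoid (fun _ => False) x y.

Definition finite_pred (P : V -> Prop) : Prop :=
  exists l : list V, forall x, P x -> List.In x l.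

Definition in_inf_comp (S : list V) (x : V) : Prop :=
  ~ List.In x S /\
  ~ finite_pred (fun y => conn_avoid (fun z => List.In z S) x y).

(* number of ends = sup over finite S of the number of infinite
   components of G - S; two-ended: connected and this sup equals 2 *)
Definition two_ended : Prop :=
  connected_graph /\
  (exists (S : list V) (x y : V),
      in_inf_comp S x /\ in_inf_comp S y /\
      ~ conn_avoid (fun z => List.In z S) x y) /\
  (forall (S : list V) (x y z : V),
      in_inf_comp S x -> in_inf_comp S y -> in_inf_comp S z ->
      conn_avoid (fun w => List.In w S) x y \/
      conn_avoid (fun w => List.In w S) x z \/
      conn_avoid (fun w => List.In w S) y z).

Definition is_aut (f : V -> V) : Prop :=
  (exists g : V -> V, (forall x, g (f x) = x) /\ (forall x, f (g x) = x)) /\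
  (forall x y, adj x y <-> adj (f x) (f y)).

Definition vertex_transitive : Prop :=
  forall u v, exists f, is_aut f /\ f u = v.

Definition aut_subgroup (H : (V -> V) -> Prop) : Prop :=
  [/\ (forall f, H f -> is_aut f),
      H (fun x => x),
      (forall f g, H f -> H g -> H (fun x => f (g x))) &
      (forall f, H f -> exists g, H g /\ forall x, g (f x) = x /\ f (g x) = x)].

Definition acts_regularly (H : (V -> V) -> Prop) : Prop :=
  forall u v, (exists f, H f /\ f u = v) /\
    (forall f g, H f -> H g -> f u = v -> g u = v -> forall x, f x = g x).

Definition is_cayley_graph : Prop :=
  exists H, aut_subgroup H /\ acts_regularly H.

End Generic.

Definition GVert := (int * 'Z_10)%type.

Definition Gamma_adj (a b : GVert) : Prop :=
  let: (n, k) := a in let: (m, l) := b in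
  (m = n /\ (l = k + 1 \/ k = l + 1)) \/
  (exists j : 'Z_10,
      (k = 2 * j + 1 /\ m = n + 1 /\ l = 4 * j + 2) \/
      (l = 2 * j + 1 /\ n = m + 1 /\ k = 4 * j + 2)).

(* Main.v *)
Require Import Defs.
From mathcomp Require Import all_boot all_order all_algebra.
From mathcomp Require Import zify ring.
From Stdlib Require Import Classical FunctionalExtensionality.
Set Implicit Arguments. Unset Strict Implicit. Unset Printing Implicit Defensive.
Import GRing.Theory.
Local Open Scope ring_scope.

Definition oddz (k : 'Z_10) : bool := odd (val k).
Fixpoint zl n : seq 'Z_10 := if n is m.+1 then (m%:R : 'Z_10) :: zl m else [::].
Definition Zall (P : pred 'Z_10) := all P (zl 10).
Lemma zlP (k : 'Z_10) : k \in zl 10.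
Proof.
have : k = (val k)%:R :> 'Z_10 by rewrite natr_Zp.
have : (val k < 10)%N by case: k.
move: (val k) => m + ->. by do 10!(case: m => [|m] //=).
Qed.
Lemma ZallP P : Zall P -> forall k, P k.
Proof. by move=> /allP H k; apply: H; rewrite zlP. Qed.

Definition up (u w : GVert) : Prop := oddz u.2 /\ w.1 = u.1 + 1 /\ w.2 = 2 * u.2.
Definition cyc (u w : GVert) : Prop := w.1 = u.1 /\ (w.2 = u.2 + 1 \/ u.2 = w.2 + 1).

Lemma fin1 : Zall (fun k => Zall (fun l =>
  has (fun j => (k == 2*j+1) && (l == 4*j+2)) (zl 10) == (oddz k && (l == 2 * k)))).
Proof. by vm_compute. Qed.

Lemma finE (k l : 'Z_10) :
  (exists j : 'Z_10, k = 2*j+1 /\ l = 4*j+2) <-> oddz k /\ l = 2 * k.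
Proof.
have /eqP H := ZallP (ZallP fin1 k) l.
split.
- move=> [j [e1 e2]].
  have : has (fun j => (k == 2*j+1) && (l == 4*j+2)) (zl 10).
    by apply/hasP; exists j; rewrite ?zlP // e1 e2 !eqxx.
  by rewrite H => /andP[-> /eqP].
- move=> [o e]. have : oddz k && (l == 2 * k) by rewrite o e eqxx.
  rewrite -H => /hasP[j _ /andP[/eqP ? /eqP ?]]. by exists j.
Qed.

Lemma adjE u w : Gamma_adj u w <-> cyc u w \/ up u w \/ up w u.
Proof.
case: u => n k; case: w => m l; rewrite /Gamma_adj /cyc /up /=.
split.
- case=> [[-> H]|[j [[e1 [e2 e3]]|[e1 [e2 e3]]]]].
  + by left; split.
  + right; left. have [o e] : oddz k /\ l = 2 * k by apply/finE; exists j.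
    by [].
  + right; right. have [o e] : oddz l /\ k = 2 * l by apply/finE; exists j.
    by [].
- case=> [[-> H]|[[o [e1 e2]]|[o [e1 e2]]]].
  + by left.
  + have [j [e3 e4]] : exists j : 'Z_10, k = 2*j+1 /\ l = 4*j+2 by apply/finE.
    by right; exists j; left.
  + have [j [e3 e4]] : exists j : 'Z_10, l = 2*j+1 /\ k = 4*j+2 by apply/finE.
    by right; exists j; right.
Qed.

Lemma adj_sym u w : Gamma_adj u w -> Gamma_adj w u.
Proof.
rewrite !adjE /cyc. case=> [[e [H|H]]|[H|H]]; [left|left|by right;right|by right;left];
  split => //; by [right|left].
Qed.

Definition rung (u : GVert) : GVert :=
  if oddz u.2 then (u.1 + 1, 2 * u.2) else (u.1 - 1, 3 * u.2 + 5).
Definition nbrs (u : GVert) : seq GVert := [:: (u.1, u.2 + 1); (u.1, u.2 - 1); rung u].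

Lemma fin2 : Zall (fun k => Zall (fun l =>
  (oddz l && (k == 2 * l)) == (~~ oddz k && (l == 3 * k + 5)))).
Proof. by vm_compute. Qed.

Lemma adj_nbrs u w : Gamma_adj u w <-> w \in nbrs u.
Proof.
case: u => n k; case: w => m l.
rewrite adjE /cyc /up /nbrs /rung /=.
have /eqP F2 := ZallP (ZallP fin2 k) l.
have /eqP F2' := ZallP (ZallP fin2 k) (3 * k + 5).
case E: (oddz k); rewrite !inE !xpair_eqE.
- split.
  + case=> [[-> [->|->]]|[[o [-> ->]]|[o [-> e]]]].
    * by rewrite !eqxx.
    * by rewrite addrK !eqxx orbT.
    * by rewrite !eqxx !orbT.
    * have : oddz l && (k == 2 * l) by rewrite o e eqxx.
      by rewrite F2 E.
  + case/or3P.
    * by move=> /andP[/eqP -> /eqP ->]; left; split => //; left.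
    * move=> /andP[/eqP -> /eqP ->]; left; split => //; right. by rewrite subrK.
    * by move=> /andP[/eqP -> /eqP ->]; right; left.
- split.
  + case=> [[-> [->|->]]|[[o [-> ->]]|[o [-> e]]]].
    * by rewrite !eqxx.
    * by rewrite addrK !eqxx orbT.
    * by [].
    * have : oddz l && (k == 2 * l) by rewrite o e eqxx.
      rewrite F2 => /andP[o' /eqP ->]. 
      by rewrite -addrA subrr addr0 !eqxx !orbT.
  + case/or3P.
    * by move=> /andP[/eqP -> /eqP ->]; left; split => //; left.
    * move=> /andP[/eqP -> /eqP ->]; left; split => //; right. by rewrite subrK.
    * move=> /andP[/eqP -> /eqP ->]. right; right.
      have : ~~ oddz k && (3 * k + 5 == 3 * k + 5) by rewrite E eqxx.
      rewrite -F2' => /andP[o1 /eqP e1]. split => //. split => //.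
      by rewrite subrK.
Qed.

Definition adjb (u w : GVert) : bool := w \in nbrs u.

Fixpoint walks (x : GVert) (n : nat) : seq (seq GVert) :=
  if n is n'.+1 then flatten [seq [seq w :: p | p <- walks w n'] | w <- nbrs x]
  else [:: [::]].

Lemma walks_complete n x p : size p = n -> path adjb x p -> p \in walks x n.
Proof.
elim: n x p => [|n IH] x [|w p] //= [Hs] /andP[Hxw Hp].
change (w :: p \in flatten [seq [seq w :: p | p <- walks w n] | w <- nbrs x]).
apply/flatten_mapP; exists w => //.
by apply: map_f; apply: IH.
Qed.

Definition v0 : GVert := (0, 0).
Definition va : GVert := (0, 1).
Definition vb : GVert := (0, 9).
Definition vc : GVert := (-1, 5).

Definition good (x y : GVert) (p : seq GVert) : bool :=
  [&& size p == 6%N, path adjb x p, last x p == y & uniq (v0 :: x :: p)].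
Definition cnt x y := size (undup (filter (good x y) (walks x 6))).

Lemma cnt_ab : cnt va vb = 4%N. Proof. by vm_compute. Qed.
Lemma cnt_ac : (cnt va vc <= 2)%N. Proof. by vm_compute. Qed.
Lemma cnt_ca : (cnt vc va <= 2)%N. Proof. by vm_compute. Qed.
Lemma cnt_bc : (cnt vb vc <= 2)%N. Proof. by vm_compute. Qed.
Lemma cnt_cb : (cnt vc vb <= 2)%N. Proof. by vm_compute. Qed.
Lemma nbrs_v0 : nbrs v0 = [:: va; vb; vc]. Proof. by apply/eqP; vm_compute. Qed.

Lemma aut_inj h : is_aut Gamma_adj h -> injective h.
Proof. by case=> [[g [Hg _]] _] x y E; rewrite -(Hg x) E Hg. Qed.

Lemma aut_adj h : is_aut Gamma_adj h -> forall x y, Gamma_adj x y -> Gamma_adj (h x) (h y).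
Proof. by case=> _ H x y /H. Qed.

Lemma aut_adjb h : is_aut Gamma_adj h -> forall x y, adjb x y -> adjb (h x) (h y).
Proof. by move=> H x y /adj_nbrs /(aut_adj H) /adj_nbrs. Qed.

Lemma aut_path h x p : is_aut Gamma_adj h -> path adjb x p -> path adjb (h x) (map h p).
Proof.
move=> H; elim: p x => [|w p IH] x //= /andP[a b].
by rewrite (aut_adjb H a) IH.
Qed.

Lemma le_inj_map (T : eqType) (f : T -> T) (s t : seq T) :
  injective f -> uniq s -> (forall p, p \in s -> f p \in t) -> (size s <= size (undup t))%N.
Proof.
move=> fi us st. rewrite -(size_map f). apply: uniq_leq_size.
  by rewrite (map_inj_uniq fi).
by move=> q /mapP[p ps ->]; rewrite mem_undup; apply: st.
Qed.

Lemma good_map h x y p : is_aut Gamma_adj h -> h v0 = v0 -> good x y p ->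
  good (h x) (h y) (map h p).
Proof.
move=> H H0; rewrite /good => /and4P[/eqP s pa /eqP l u].
have U : uniq (v0 :: h x :: map h p).
  have -> : v0 :: h x :: map h p = map h (v0 :: x :: p) by rewrite /= H0.
  by rewrite (map_inj_uniq (aut_inj H)).
by rewrite size_map s eqxx (aut_path H pa) last_map l eqxx U.
Qed.

Lemma good_walks x y p : good x y p -> p \in walks x 6.
Proof.
rewrite /good => /and4P[/eqP s pa _ _]. exact: walks_complete.
Qed.

Lemma cnt_map h x y : is_aut Gamma_adj h -> h v0 = v0 -> (cnt x y <= cnt (h x) (h y))%N.
Proof.
move=> H H0. rewrite /cnt.
apply: (le_inj_map (inj_map (aut_inj H))); first exact: undup_uniq.
move=> p; rewrite mem_undup !mem_filter => /andP[G _].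
have G' := good_map H H0 G.
by rewrite G' (good_walks G').
Qed.

Lemma vneq : [&& va != vb, va != vc & vb != vc].
Proof. by vm_compute. Qed.

Lemma stab_c h : is_aut Gamma_adj h -> h v0 = v0 -> h vc = vc.
Proof.
move=> H H0.
have N x : Gamma_adj v0 x -> h x \in [:: va; vb; vc].
  by move/(aut_adj H); rewrite H0 => /adj_nbrs; rewrite nbrs_v0.
have Ha : h va \in [:: va; vb; vc] by apply: N; apply/adj_nbrs; rewrite nbrs_v0 !inE eqxx.
have Hb : h vb \in [:: va; vb; vc] by apply: N; apply/adj_nbrs; rewrite nbrs_v0 !inE eqxx orbT.
have Hc : h vc \in [:: va; vb; vc] by apply: N; apply/adj_nbrs; rewrite nbrs_v0 !inE eqxx !orbT.
have /and3P[d1 d2 d3] := vneq.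
have Dab : h va != h vb by rewrite (inj_eq (aut_inj H)).
have Dac : h va != h vc by rewrite (inj_eq (aut_inj H)).
have Dbc : h vb != h vc by rewrite (inj_eq (aut_inj H)).
have C := cnt_map va vb H H0. rewrite cnt_ab in C.
rewrite !inE in Ha Hb Hc.
move: cnt_ac cnt_ca cnt_bc cnt_cb C; move: cnt => c c1 c2 c3 c4 C.
case/or3P: Hc => /eqP Hc //; 
case/or3P: Ha => /eqP Ha; case/or3P: Hb => /eqP Hb;
  rewrite ?Ha ?Hb ?Hc in Dab Dac Dbc C; rewrite ?eqxx in Dab Dac Dbc; try done.
all: first [by have := leq_trans C c1 | by have := leq_trans C c2
  | by have := leq_trans C c3 | by have := leq_trans C c4].
Qed.

Lemma aut_of (f g : GVert -> GVert) :
  (forall x, g (f x) = x) -> (forall x, f (g x) = x) ->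
  (forall x y, Gamma_adj x y -> Gamma_adj (f x) (f y)) ->
  (forall x y, Gamma_adj x y -> Gamma_adj (g x) (g y)) -> is_aut Gamma_adj f.
Proof.
move=> gf fg Hf Hg; split; first by exists g.
move=> x y; split; first exact: Hf.
by move=> /Hg; rewrite !gf.
Qed.

Lemma pres (F : GVert -> GVert) :
  (forall u w, cyc u w -> Gamma_adj (F u) (F w)) ->
  (forall u w, up u w -> Gamma_adj (F u) (F w)) ->
  forall u w, Gamma_adj u w -> Gamma_adj (F u) (F w).
Proof.
move=> Hc Hu u w /adjE [H|[H|H]]; [exact: Hc|exact: Hu|].
exact/adj_sym/Hu.
Qed.

Definition LR (f : GVert -> GVert) :=
  is_aut Gamma_adj f /\ forall x y, (f x).1 = (f y).1 <-> x.1 = y.1.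

Lemma aut_comp f g : is_aut Gamma_adj f -> is_aut Gamma_adj g ->
  is_aut Gamma_adj (fun x => f (g x)).
Proof.
move=> [[f' [f1 f2]] Hf] [[g' [g1 g2]] Hg]; split.
  exists (fun x => g' (f' x)); split => x; by rewrite ?f1 ?g1 ?g2 ?f2.
by move=> x y; rewrite Hg Hf.
Qed.

Lemma LR_comp f g : LR f -> LR g -> LR (fun x => f (g x)).
Proof.
move=> [Af Lf] [Ag Lg]; split; first exact: aut_comp.
by move=> x y; rewrite Lf Lg.
Qed.

Definition shiftv (c : int) (u : GVert) : GVert := (u.1 + c, u.2).
Definition pw (n : int) : 'Z_10 :=
  match n with Posz m => 2 ^+ m | Negz m => 3 ^+ m.+1 end.
Definition rotv (a : 'Z_10) (u : GVert) : GVert := (u.1, u.2 + a * pw u.1).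
Definition sgn10 (n : int) : 'Z_10 := if odd `|n|%N then -1 else 1.
Definition sigv (u : GVert) : GVert := (- u.1, sgn10 u.1 * u.2 + 5).
Definition refv (u : GVert) : GVert := (u.1, - u.2).

Lemma fin_a : Zall (fun a => oddz a || (a == 2 * (a * 3))).
Proof. by vm_compute. Qed.
Lemma fin_b : Zall (fun a => Zall (fun y => oddz a || ~~ oddz (a * y))).
Proof. by vm_compute. Qed.
Lemma fin_c : Zall (fun x => oddz x || (x == 2 * (3 * x)) ).
Proof. by vm_compute. Qed.

Lemma int_S (m : nat) : Posz m + 1 = Posz m.+1.
Proof. lia. Qed.
Lemma int_N0 : Negz 0 + 1 = 0.
Proof. by []. Qed.
Lemma int_NS (m : nat) : Negz m.+1 + 1 = Negz m.
Proof. rewrite !NegzE. lia. Qed.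

Lemma pw_succ (a : 'Z_10) n : ~~ oddz a -> a * pw (n + 1) = 2 * (a * pw n).
Proof.
move=> ea; case: n => [m|[|m]].
- by rewrite int_S /= exprS mulrCA.
- rewrite int_N0 /= expr1 mulr1.
  by have := ZallP fin_a a; rewrite (negbTE ea) /= => /eqP.
- rewrite int_NS /=.
  have ex : ~~ oddz (a * 3 ^+ m.+1).
    by have := ZallP (ZallP fin_b a) (3 ^+ m.+1); rewrite (negbTE ea).
  have := ZallP fin_c (a * 3 ^+ m.+1); rewrite (negbTE ex) /= => /eqP ->.
  by rewrite [3 ^+ m.+2]exprS; congr (2 * _); rewrite mulrCA.
Qed.

Lemma sgn_succ n : sgn10 (n + 1) = - sgn10 n.
Proof.
rewrite /sgn10; case: n => [m|[|m]].
- by rewrite int_S /=; case: (odd m); rewrite ?opprK.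
- by rewrite int_N0 /= opprK.
- by rewrite int_NS /=; case: (odd m); rewrite /= ?opprK.
Qed.

Lemma sgn_opp n : sgn10 (- n) = sgn10 n.
Proof. by rewrite /sgn10 abszN. Qed.

Lemma sgn_pm n : sgn10 n = 1 \/ sgn10 n = -1.
Proof. by rewrite /sgn10; case: ifP; [right|left]. Qed.

Lemma fin_rot : Zall (fun k => Zall (fun e => oddz k ==> ~~ oddz e ==> oddz (k + e))).
Proof. by vm_compute. Qed.
Lemma fin_neg : Zall (fun a => oddz (- a) == oddz a).
Proof. by vm_compute. Qed.
Lemma fin_sig : Zall (fun k => oddz k ==>
  [&& oddz (- 1 * (2 * k) + 5), 1 * k + 5 == 2 * (- 1 * (2 * k) + 5),
      oddz (- - 1 * (2 * k) + 5) & - 1 * k + 5 == 2 * (- - 1 * (2 * k) + 5)]).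
Proof. by vm_compute. Qed.
Lemma f55 : (5 + 5 : 'Z_10) = 0.
Proof. by apply/eqP; vm_compute. Qed.

Lemma shift_LR c : LR (shiftv c).
Proof.
split; last by move=> [n k] [m l]; rewrite /shiftv /=; split; lia.
apply: (@aut_of _ (shiftv (- c))).
- by move=> [n k]; rewrite /shiftv /= addrK.
- by move=> [n k]; rewrite /shiftv /= subrK.
- apply: pres.
  + move=> [n k] [m l]; move=> HH; apply/adjE; move: HH; rewrite /cyc /up /= => [[e H]]; left.
    by rewrite /cyc /= e.
  + move=> [n k] [m l]; move=> HH; apply/adjE; move: HH; rewrite /cyc /up /= => [[o [e1 e2]]]; right; left.
    rewrite /up /= e1 e2; split => //; split => //; by rewrite addrAC.
- apply: pres.
  + move=> [n k] [m l]; move=> HH; apply/adjE; move: HH; rewrite /cyc /up /= => [[e H]]; left.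
    by rewrite /cyc /= e.
  + move=> [n k] [m l]; move=> HH; apply/adjE; move: HH; rewrite /cyc /up /= => [[o [e1 e2]]]; right; left.
    rewrite /up /= e1 e2; split => //; split => //; by rewrite addrAC.
Qed.

Lemma rot_pres a : ~~ oddz a -> forall u w, Gamma_adj u w -> Gamma_adj (rotv a u) (rotv a w).
Proof.
move=> ea; apply: pres.
- move=> [n k] [m l]; move=> HH; apply/adjE; move: HH; rewrite /cyc /up /= => [[e [H|H]]]; left;
    rewrite /cyc /= e H; split => //; [left|right]; by rewrite addrAC.
- move=> [n k] [m l]; move=> HH; apply/adjE; move: HH; rewrite /cyc /up /= => [[o [e1 e2]]]; right; left.
  rewrite /up /= e1 e2; split.
    have eb := ZallP (ZallP fin_b a) (pw n); rewrite (negbTE ea) /= in eb.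
    by have := ZallP (ZallP fin_rot k) (a * pw n); rewrite o eb.
  by split => //; rewrite pw_succ // mulrDr.
Qed.

Lemma rot_LR a : ~~ oddz a -> LR (rotv a).
Proof.
move=> ea; split; last by move=> [n k] [m l]; rewrite /rotv /=.
apply: (@aut_of _ (rotv (- a))).
- by move=> [n k]; rewrite /rotv /= mulNr addrK.
- by move=> [n k]; rewrite /rotv /= mulNr subrK.
- exact: rot_pres.
- apply: rot_pres. by have := ZallP fin_neg a; rewrite (negbTE ea) => /eqP ->.
Qed.

Lemma sig_invol u : sigv (sigv u) = u.
Proof.
case: u => n k; rewrite /sigv /= opprK sgn_opp; congr pair.
case: (sgn_pm n) => ->; last by ring.
transitivity (k + (5 + 5)); first by ring.
by rewrite f55 addr0.
Qed.

Lemma sig_pres u w : Gamma_adj u w -> Gamma_adj (sigv u) (sigv w).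
Proof.
move: u w; apply: pres.
- move=> [n k] [m l]; move=> HH; apply/adjE; move: HH; rewrite /cyc /up /= => [[e [H|H]]]; left;
    rewrite /cyc /= e H; split => //; case: (sgn_pm n) => ->;
    by [left; ring | right; ring].
- move=> [n k] [m l]; move=> HH; apply/adjE; move: HH; rewrite /cyc /up /= => [[o [e1 e2]]]; right; right.
  rewrite /up /= e1 e2 sgn_succ.
  have := ZallP fin_sig k; rewrite o /= => /and4P[o1 /eqP q1 o2 /eqP q2].
  case: (sgn_pm n) => ->; (split; [done| split; [lia | done]]).
Qed.

Lemma sig_LR : LR sigv.
Proof.
split; last by move=> [n k] [m l]; rewrite /sigv /=; split; lia.
apply: (@aut_of _ sigv) => //; [exact: sig_invol | exact: sig_invol |exact: sig_pres|exact: sig_pres].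
Qed.

Lemma ref_pres u w : Gamma_adj u w -> Gamma_adj (refv u) (refv w).
Proof.
move: u w; apply: pres.
- move=> [n k] [m l]; move=> HH; apply/adjE; move: HH; rewrite /cyc /up /= => [[e [H|H]]]; left;
    rewrite /cyc /= e H; split => //; by [right; ring | left; ring].
- move=> [n k] [m l]; move=> HH; apply/adjE; move: HH; rewrite /cyc /up /= => [[o [e1 e2]]]; right; left.
  rewrite /up /= e1 e2; split; last by rewrite mulrN.
  by have := ZallP fin_neg k; rewrite o => /eqP ->.
Qed.

Lemma ref_LR : LR refv.
Proof.
split; last by move=> [n k] [m l]; rewrite /refv /=.
by apply: (@aut_of _ refv) => //; try (by move=> [n k]; rewrite /refv /= opprK); exact: ref_pres.
Qed.

Lemma fin_k5 : Zall (fun k => oddz k ==> ~~ oddz (k - 5) && ~~ oddz (5 - k)).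
Proof. by vm_compute. Qed.

Lemma sgn0 : sgn10 0 = 1. Proof. by []. Qed.
Lemma pw0 : pw 0 = 1. Proof. by []. Qed.

Lemma from0 u : exists f, LR f /\ f v0 = u.
Proof.
case: u => n k.
have /implyP K5 := ZallP fin_k5 k.
case E: (oddz k).
- exists (fun x => shiftv n (rotv (k - 5) (sigv x))); split.
    apply: LR_comp; first exact: shift_LR.
    apply: LR_comp; last exact: sig_LR.
    by apply: rot_LR; case/andP: (K5 E).
  rewrite /v0 /shiftv /rotv /sigv /= oppr0 sgn0 mulr0 !add0r expr0 mulr1.
  by congr pair; rewrite addrC subrK.
- exists (fun x => shiftv n (rotv k x)); split.
    by apply: LR_comp; [exact: shift_LR | apply: rot_LR; rewrite E].
  by rewrite /v0 /shiftv /rotv /= add0r expr0 mulr1 add0r.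
Qed.

Lemma to0 u : exists f, LR f /\ f u = v0.
Proof.
case: u => n k.
have /implyP K5 := ZallP fin_k5 k.
case E: (oddz k).
- exists (fun x => sigv (rotv (5 - k) (shiftv (- n) x))); split.
    apply: LR_comp; first exact: sig_LR.
    apply: LR_comp; last exact: shift_LR.
    by apply: rot_LR; case/andP: (K5 E).
  by rewrite /v0 /shiftv /rotv /sigv /= subrr sgn0 oppr0 /= expr0 mulr1 mul1r (addrC k) subrK f55.
- exists (fun x => rotv (- k) (shiftv (- n) x)); split.
    apply: LR_comp; last exact: shift_LR.
    by apply: rot_LR; have := ZallP fin_neg k; rewrite E => /eqP ->.
  by rewrite /v0 /shiftv /rotv /= subrr /= expr0 mulr1 subrr.
Qed.

Lemma trans_LR u w : exists f, LR f /\ f u = w.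
Proof.
have [f1 [L1 E1]] := to0 u; have [f2 [L2 E2]] := from0 w.
by exists (fun x => f2 (f1 x)); split; [exact: LR_comp | rewrite E1 E2].
Qed.

Lemma stab_layer k x : is_aut Gamma_adj k -> k v0 = v0 -> Gamma_adj v0 x ->
  (v0.1 == x.1) = ((k v0).1 == (k x).1).
Proof.
move=> H H0 Ax.
have Hc := stab_c H H0.
have /and3P[d1 d2 d3] := vneq.
have N y : Gamma_adj v0 y -> y \in [:: va; vb; vc] by move/adj_nbrs; rewrite nbrs_v0.
have Kx : k x \in [:: va; vb; vc] by apply: N; rewrite -H0; exact: aut_adj.
have Xx := N x Ax.
rewrite H0; rewrite !inE in Kx Xx.
case/or3P: Xx => /eqP Xx; case/or3P: Kx => /eqP Kx; rewrite Kx Xx //.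
- by move: Kx; rewrite -Hc Xx => /(aut_inj H) E; rewrite E eqxx in d2.
- by move: Kx; rewrite -Hc Xx => /(aut_inj H) E; rewrite E eqxx in d3.
- by move: Kx; rewrite Xx Hc => E; rewrite E eqxx in d2.
- by move: Kx; rewrite Xx Hc => E; rewrite -E eqxx in d3.
Qed.

Lemma LR_eq f a b : LR f -> ((f a).1 == (f b).1) = (a.1 == b.1).
Proof. by case=> _ L; apply/eqP/eqP => /L. Qed.

Lemma aut_layer h u w : is_aut Gamma_adj h -> Gamma_adj u w ->
  (u.1 == w.1) = ((h u).1 == (h w).1).
Proof.
move=> Ah Auw.
have [T [LT ET]] := from0 u; have [Sm [LS ES]] := to0 (h u).
have [[T' [T1 T2]] TA] := LT.1.
set x := T' w.
have Tx : T x = w by rewrite /x T2.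
have Ax : Gamma_adj v0 x by apply/TA; rewrite ET Tx.
have Ak : is_aut Gamma_adj (fun y => Sm (h (T y))).
  by apply: aut_comp; [exact: LS.1 | apply: aut_comp; [exact: Ah| exact: LT.1]].
have K0 : Sm (h (T v0)) = v0 by rewrite ET ES.
have := stab_layer Ak K0 Ax.
rewrite K0 -(LR_eq _ _ LT) ET Tx => ->.
by rewrite -ES LR_eq.
Qed.

Lemma same_layer_nbr m k w : Gamma_adj (m, k) w -> w.1 = m -> w = (m, k + 1) \/ w = (m, k - 1).
Proof.
move/adj_nbrs; rewrite /nbrs /rung !inE /=.
case/or3P => [/eqP ->|/eqP ->|]; [by left|by right|].
by case: ifP => _ /eqP -> /=; lia.
Qed.

Lemma diff_layer_nbr u w : Gamma_adj u w -> w.1 <> u.1 -> w = rung u.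
Proof.
move/adj_nbrs; rewrite /nbrs !inE.
by case/or3P => /eqP -> //.
Qed.

Lemma fin_p2 : Zall (fun a => a + 1 + 1 != a).
Proof. by vm_compute. Qed.

Lemma layer_prop h m j : is_aut Gamma_adj h -> h (m, j) = (m, j) -> h (m, j + 1) = (m, j + 1) ->
  forall k, h (m, k) = (m, k).
Proof.
move=> Ah H0 H1.
have P t : h (m, j + t%:R) = (m, j + t%:R) /\ h (m, j + t%:R + 1) = (m, j + t%:R + 1).
  elim: t => [|t [IH1 IH2]]; first by rewrite addr0.
  have E : j + t.+1%:R = j + t%:R + 1 by rewrite -natr1 addrA.
  rewrite E; split => //.
  have A : Gamma_adj (m, j + t%:R + 1) (m, j + t%:R + 1 + 1).
    by apply/adj_nbrs; rewrite /nbrs !inE eqxx.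
  have L := aut_layer Ah A. rewrite eqxx IH2 /= in L.
  have A' := aut_adj Ah A; rewrite IH2 in A'.
  have := same_layer_nbr A'.
  have -> : (h (m, j + t%:R + 1 + 1)).1 = m by apply/eqP; rewrite eq_sym.
  case=> // E2.
  have : h (m, j + t%:R + 1 + 1) = h (m, j + t%:R) by rewrite E2 IH1 addrK.
  move/(aut_inj Ah) => E4.
  have E3 : j + t%:R + 1 + 1 = j + t%:R := congr1 snd E4.
  by move: (ZallP fin_p2 (j + t%:R)); rewrite E3 eqxx.
move=> k.
have -> : k = j + (val (k - j))%:R by rewrite natr_Zp addrC subrK.
exact: (P _).1.
Qed.

Definition fixes_layer (h : GVert -> GVert) (m : int) := forall k, h (m, k) = (m, k).

Lemma rung_fix h u : is_aut Gamma_adj h -> h u = u -> h (rung u) = rung u.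
Proof.
move=> Ah Hu.
have A : Gamma_adj u (rung u) by apply/adj_nbrs; rewrite /nbrs !inE eqxx !orbT.
have L := aut_layer Ah A.
have D : (rung u).1 <> u.1 by rewrite /rung; case: ifP => _ /=; lia.
have A' := aut_adj Ah A; rewrite Hu in A'.
apply: (diff_layer_nbr A') => E.
move: L; rewrite Hu E eqxx.
by move=> /eqP /esym /D.
Qed.

Lemma pair_neq (m : int) (a b : 'Z_10) : a != b -> (m, a) <> (m, b).
Proof. by move=> /eqP ab E; apply: ab; exact: (congr1 snd E). Qed.

Lemma r1 m : rung (m, 1) = (m + 1, 2).
Proof. by rewrite /rung /=; congr pair; apply/eqP; vm_compute. Qed.
Lemma r7 m : rung (m, 7) = (m + 1, 4).
Proof. by rewrite /rung /=; congr pair; apply/eqP; vm_compute. Qed.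
Lemma r2 m : rung (m, 2) = (m - 1, 1).
Proof. by rewrite /rung /=; congr pair; apply/eqP; vm_compute. Qed.
Lemma r6 m : rung (m, 6) = (m - 1, 3).
Proof. by rewrite /rung /=; congr pair; apply/eqP; vm_compute. Qed.

Lemma cycle_nbr h m k : is_aut Gamma_adj h -> h (m, k) = (m, k) ->
  h (m, k + 1) = (m, k + 1) \/ h (m, k + 1) = (m, k - 1).
Proof.
move=> Ah Hk.
have A : Gamma_adj (m, k) (m, k + 1) by apply/adj_nbrs; rewrite /nbrs !inE eqxx.
have L := aut_layer Ah A. rewrite eqxx Hk /= in L.
have A' := aut_adj Ah A; rewrite Hk in A'.
by apply: (same_layer_nbr A'); apply/eqP; rewrite eq_sym.
Qed.

Lemma cycle_nbr' h m k : is_aut Gamma_adj h -> h (m, k) = (m, k) ->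
  h (m, k - 1) = (m, k + 1) \/ h (m, k - 1) = (m, k - 1).
Proof.
move=> Ah Hk.
have A : Gamma_adj (m, k) (m, k - 1) by apply/adj_nbrs; rewrite /nbrs !inE eqxx orbT.
have L := aut_layer Ah A. rewrite eqxx Hk /= in L.
have A' := aut_adj Ah A; rewrite Hk in A'.
by apply: (same_layer_nbr A'); apply/eqP; rewrite eq_sym.
Qed.

Lemma fin_cn : [&& (2 + 1 : 'Z_10) == 4 - 1, (2 - 1 : 'Z_10) != 4 + 1 & (2 - 1 : 'Z_10) != 4 - 1].
Proof. by vm_compute. Qed.
Lemma fin_cn' : [&& (1 + 1 : 'Z_10) == 3 - 1, (1 - 1 : 'Z_10) != 3 + 1 & (1 - 1 : 'Z_10) != 3 - 1].
Proof. by vm_compute. Qed.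

Lemma layer_up h m : is_aut Gamma_adj h -> fixes_layer h m -> fixes_layer h (m + 1).
Proof.
move=> Ah F.
have F2 : h (m + 1, 2) = (m + 1, 2) by rewrite -r1 rung_fix.
have F4 : h (m + 1, 4) = (m + 1, 4) by rewrite -r7 rung_fix.
have /and3P[e1 e2 e3] := fin_cn.
have F3 : h (m + 1, 2 + 1) = (m + 1, 2 + 1).
  case: (cycle_nbr Ah F2) => E; first exact: E.
  rewrite (eqP e1) in E *.
  case: (cycle_nbr' Ah F4) => E'; last exact: E'.
  rewrite E' in E. by case: (pair_neq e2 (esym E)).
exact: (layer_prop Ah F2 F3).
Qed.

Lemma layer_down h m : is_aut Gamma_adj h -> fixes_layer h m -> fixes_layer h (m - 1).
Proof.
move=> Ah F.
have F1 : h (m - 1, 1) = (m - 1, 1) by rewrite -r2 rung_fix.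
have F3 : h (m - 1, 3) = (m - 1, 3) by rewrite -r6 rung_fix.
have /and3P[e1 e2 e3] := fin_cn'.
have F2 : h (m - 1, 1 + 1) = (m - 1, 1 + 1).
  case: (cycle_nbr Ah F1) => E; first exact: E.
  rewrite (eqP e1) in E *.
  case: (cycle_nbr' Ah F3) => E'; last exact: E'.
  rewrite E' in E. by case: (pair_neq e2 (esym E)).
exact: (layer_prop Ah F1 F2).
Qed.

Lemma fix_all h : is_aut Gamma_adj h -> h v0 = v0 -> h va = va -> forall x, h x = x.
Proof.
move=> Ah H0 Ha.
have F0 : fixes_layer h 0.
  apply: (@layer_prop h 0 0 Ah H0). by rewrite add0r.
have P t : fixes_layer h (t%:Z) /\ fixes_layer h (- (t%:Z)).
  elim: t => [|t [IH1 IH2]]; first by rewrite oppr0.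
  split.
  - have -> : (t.+1)%:Z = t%:Z + 1 by lia.
    exact: layer_up.
  - have -> : - ((t.+1)%:Z) = - (t%:Z) - 1 by lia.
    exact: layer_down.
case=> [[m|m] k].
- exact: (P m).1.
- rewrite NegzE. exact: (P m.+1).2.
Qed.

Lemma refv_inv y : refv (refv y) = y. Proof. by case: y => n k; rewrite /refv /= opprK. Qed.
Lemma refv_v0 : refv v0 = v0. Proof. by rewrite /refv /= oppr0. Qed.
Lemma refv_vb : refv vb = va. Proof. by apply/eqP; vm_compute. Qed.

Lemma stab h : is_aut Gamma_adj h -> h v0 = v0 ->
  (forall x, h x = x) \/ (forall x, h x = refv x).
Proof.
move=> Ah H0.
have A : Gamma_adj v0 va by apply/adj_nbrs; rewrite nbrs_v0 !inE eqxx.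
have L := aut_layer Ah A. rewrite H0 in L.
have A' := aut_adj Ah A; rewrite H0 in A'.
move/adj_nbrs: A'; rewrite nbrs_v0 !inE => /or3P[/eqP E|/eqP E|/eqP E].
- by left; apply: fix_all.
- right.
  have Ah' : is_aut Gamma_adj (fun x => refv (h x)) by apply: aut_comp => //; exact: ref_LR.1.
  have := fix_all Ah'; rewrite H0 E refv_v0 refv_vb => /(_ erefl erefl) F x.
  by rewrite -{2}(F x) refv_inv.
- move: L; rewrite E. by vm_compute.
Qed.

Definition gv (x : GVert) : GVert := shiftv 1 (sigv x).

Lemma gv_aut : is_aut Gamma_adj gv.
Proof. apply: aut_comp; [exact: (shift_LR 1).1 | exact: sig_LR.1]. Qed.

Lemma gv2 x : gv (gv x) = refv x.
Proof.
case: x => n k; rewrite /gv /shiftv /sigv /refv /=.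
congr pair; first by lia.
rewrite sgn_succ sgn_opp.
case: (sgn_pm n) => ->; first by ring.
transitivity (- k + (5 + 5)); first by ring.
by rewrite f55 addr0.
Qed.

Lemma not_cayley : ~ is_cayley_graph Gamma_adj.
Proof.
move=> [H [[HA Hid Hcomp Hinv] Hreg]].
suff Hr : H refv.
  have [_ U] := Hreg v0 v0.
  have := U _ _ Hr Hid refv_v0 erefl va.
  by apply/eqP; vm_compute.
have [h [Hh Eh]] := (Hreg v0 (gv v0)).1.
have [h' [Hh' Ih]] := Hinv h Hh.
have Ak : is_aut Gamma_adj (fun x => h' (gv x)) by apply: aut_comp; [exact: HA | exact: gv_aut].
have K0 : h' (gv v0) = v0 by rewrite -Eh (Ih v0).1.
case: (stab Ak K0) => K.
- have E x : gv x = h x by rewrite -{2}(K x) (Ih (gv x)).2.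
  have -> : refv = fun x => h (h x).
    by apply: functional_extensionality => x; rewrite -gv2 !E.
  exact: Hcomp.
- have E x : gv x = h (refv x) by rewrite -(K x) (Ih (gv x)).2.
  have Am : is_aut Gamma_adj (fun x => refv (h x)) by apply: aut_comp; [exact: ref_LR.1 | exact: HA].
  have [h2 [Hh2 Eh2]] := (Hreg v0 (refv (h v0))).1.
  have [h2' [Hh2' Ih2]] := Hinv h2 Hh2.
  have Ak2 : is_aut Gamma_adj (fun x => h2' (refv (h x))) by apply: aut_comp; [exact: HA | exact: Am].
  have K20 : h2' (refv (h v0)) = v0 by rewrite -Eh2 (Ih2 v0).1.
  case: (stab Ak2 K20) => K2.
  + have E2 x : refv (h x) = h2 x by rewrite -{2}(K2 x) (Ih2 _).2.
    have -> : refv = fun x => h2 (h' x).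
      by apply: functional_extensionality => x; rewrite -E2 (Ih x).2.
    exact: Hcomp.
  + have E2 x : refv (h x) = h2 (refv x) by rewrite -(K2 x) (Ih2 _).2.
    have -> : refv = fun x => h (h2 x).
      apply: functional_extensionality => x.
      by rewrite -gv2 E E E2 refv_inv.
    exact: Hcomp.
Qed.

Lemma vtrans : vertex_transitive Gamma_adj.
Proof. move=> u w; have [f [[Af _] E]] := trans_LR u w; by exists f. Qed.

Lemma fin_pm : Zall (fun k => k + 1 != k - 1).
Proof. by vm_compute. Qed.

Lemma cubicG : cubic Gamma_adj.
Proof.
move=> [n k].
exists (n, k + 1), (n, k - 1), (rung (n, k)).
have D : forall a, (rung (n, k)) <> (n, a).
  by move=> a; rewrite /rung; case: ifP => _ [] /=; lia.
split; [split|split; [split|]].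
- by apply: pair_neq; exact: (ZallP fin_pm k).
- by move=> E; apply: (D (k + 1)); rewrite E.
- by move=> E; apply: (D (k - 1)); rewrite E.
- by apply/adj_nbrs; rewrite /nbrs !inE eqxx.
- by apply/adj_nbrs; rewrite /nbrs !inE eqxx orbT.
- by apply/adj_nbrs; rewrite /nbrs !inE eqxx !orbT.
- by move=> w /adj_nbrs; rewrite /nbrs !inE => /or3P[/eqP->|/eqP->|/eqP->]; auto.
Qed.

Notation CA S := (conn_avoid Gamma_adj S).

Lemma ca_ends S x y : CA S x y -> ~ S x /\ ~ S y.
Proof. by elim=> [z nz|a b c _ [na _] _ nc]. Qed.

Lemma ca_trans S x y z : CA S x y -> CA S y z -> CA S x z.
Proof.
move=> Hxy Hyz; elim: Hyz Hxy => [w nw|a b c _ IH abc nc] H //.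
exact: (ca_step (IH H) abc nc).
Qed.

Lemma ca_edge S x y : ~ S x -> ~ S y -> Gamma_adj x y -> CA S x y.
Proof. by move=> nx ny A; apply: (ca_step (ca_refl Gamma_adj nx) A ny). Qed.

Lemma ca_sym S x y : CA S x y -> CA S y x.
Proof.
elim=> [z nz|a b c Hab IH bc nc]; first exact: ca_refl.
have [_ nb] := ca_ends Hab.
exact: ca_trans (ca_edge nc nb (adj_sym bc)) IH.
Qed.

Definition free (S : GVert -> Prop) (m : int) := forall k, ~ S (m, k).

Lemma ca_layer S m : free S m -> forall k k', CA S (m, k) (m, k').
Proof.
move=> F k k'.
have P t : CA S (m, k) (m, k + t%:R).
  elim: t => [|t IH]; first by rewrite addr0; apply: ca_refl.
  apply: (ca_step IH); last exact: F.
  by apply/adj_nbrs; rewrite /nbrs !inE -natr1 addrA eqxx.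
have -> : k' = k + (val (k' - k))%:R by rewrite natr_Zp addrC subrK.
exact: P.
Qed.

Lemma ca_next S m : free S m -> free S (m + 1) -> CA S (m, 0) (m + 1, 0).
Proof.
move=> F F1.
apply: ca_trans (ca_layer F 0 1) _.
apply: ca_trans (ca_layer F1 2 0).
apply: ca_edge; [exact: F|exact: F1|].
by rewrite -r1; apply/adj_nbrs; rewrite /nbrs !inE eqxx !orbT.
Qed.

Lemma adj_layer u w : Gamma_adj u w -> w.1 = u.1 \/ w.1 = u.1 + 1 \/ w.1 = u.1 - 1.
Proof.
move/adj_nbrs; rewrite /nbrs /rung !inE.
case/or3P => [/eqP ->|/eqP ->|]; [by left|by left|].
by case: ifP => _ /eqP -> /=; right; [left|right].
Qed.

Lemma connG : connected_graph Gamma_adj.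
Proof.
set S := fun _ : GVert => False.
have F m : free S m by move=> k [].
have P t : CA S (0, 0) (t%:Z, 0) /\ CA S (0, 0) (- t%:Z, 0).
  elim: t => [|t [IH1 IH2]]; first by rewrite oppr0; split; apply: ca_refl.
  split.
  - have -> : (t.+1)%:Z = t%:Z + 1 by lia.
    exact: ca_trans IH1 (ca_next (F _) (F _)).
  - have E : - (t%:Z) = (- (t.+1)%:Z) + 1 by lia.
    apply: ca_trans IH2 _; rewrite E; apply: ca_sym; exact: ca_next (F _) (F _).
have Q x : CA S (0, 0) x.
  case: x => [[m|m] k].
  - exact: ca_trans (P m).1 (ca_layer (F _) _ _).
  - rewrite NegzE; exact: ca_trans (P m.+1).2 (ca_layer (F _) _ _).
move=> x y; exact: ca_trans (ca_sym (Q x)) (Q y).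
Qed.

Lemma In_mem (T : eqType) (x : T) (l : list T) : List.In x l <-> x \in l.
Proof.
elim: l => [|a l IH] //=; rewrite inE; split.
- by case=> [->|/IH ->]; rewrite ?eqxx ?orbT.
- by case/orP => [/eqP ->|/IH]; [left|right].
Qed.

Definition bnd (l : list GVert) : nat := foldr (fun v acc => maxn (absz v.1) acc) 0%N l.

Lemma bnd_ge l v : List.In v l -> (absz v.1 <= bnd l)%N.
Proof.
elim: l => [|a l IH] //= [->|/IH H]; first exact: leq_maxl.
exact: leq_trans H (leq_maxr _ _).
Qed.

Lemma free_big (l : list GVert) m : (bnd l < absz m)%N -> free (fun z => List.In z l) m.
Proof.
move=> H k /bnd_ge /= H'. by move: (leq_ltn_trans H' H); rewrite ltnn.
Qed.

Section Ends.
Variable l : list GVert.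
Let Sl := fun z => List.In z l.
Let B := bnd l.
Let T : GVert := ((B.+1)%:Z, 0).
Let Bo : GVert := (- (B.+1)%:Z, 0).

Lemma reach_top n k : (B.+1)%:Z <= n -> CA Sl T (n, k).
Proof.
move=> Hn.
have P t : CA Sl T ((B.+1)%:Z + t%:Z, 0).
  elim: t => [|t IH]; first by rewrite addr0; apply: ca_refl; apply: free_big => /=; lia.
  have -> : (B.+1)%:Z + (t.+1)%:Z = (B.+1)%:Z + t%:Z + 1 by lia.
  apply: ca_trans IH (ca_next _ _); apply: free_big; rewrite -/B; lia.
have -> : n = (B.+1)%:Z + (absz (n - (B.+1)%:Z))%:Z by lia.
apply: ca_trans (P _) (ca_layer _ _ _); apply: free_big; rewrite -/B; lia.
Qed.

Lemma reach_bot n k : n <= - (B.+1)%:Z -> CA Sl Bo (n, k).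
Proof.
move=> Hn.
have P t : CA Sl Bo (- (B.+1)%:Z - t%:Z, 0).
  elim: t => [|t IH]; first by rewrite subr0; apply: ca_refl; apply: free_big => /=; lia.
  have E : - (B.+1)%:Z - t%:Z = (- (B.+1)%:Z - (t.+1)%:Z) + 1 by lia.
  apply: ca_trans IH _; rewrite E; apply: ca_sym; apply: ca_next; apply: free_big; rewrite -/B; lia.
have -> : n = - (B.+1)%:Z - (absz (n + (B.+1)%:Z))%:Z by lia.
apply: ca_trans (P _) (ca_layer _ _ _); apply: free_big; rewrite -/B; lia.
Qed.

Definition box : seq GVert :=
  [seq ((i%:Z - B%:Z), k) | i <- iota 0 (B + B).+1, k <- zl 10].

Lemma in_box n k : (absz n <= B)%N -> (n, k) \in box.
Proof.
move=> H.
have -> : n = (absz (n + B%:Z))%:Z - B%:Z by lia.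
apply: (allpairs_f (fun i k => (i%:Z - B%:Z, k))); last exact: zlP.
rewrite mem_iota /=; lia.
Qed.

Lemma inf_reach x : in_inf_comp Gamma_adj l x -> CA Sl x T \/ CA Sl x Bo.
Proof.
move=> [nx nf].
case: (classic (exists y, CA Sl x y /\ (B < absz y.1)%N)) => [[[n k] [Cy Hy]]|Hno].
- case: (boolP (0 <= n)) => Hn /=.
  + left; apply: ca_trans Cy (ca_sym (reach_top k _)); move: Hy => /=; lia.
  + right; apply: ca_trans Cy (ca_sym (reach_bot k _)); move: Hy => /=; lia.
- exfalso; apply: nf; exists box => [[n k]] Cy.
  apply/In_mem; apply: in_box; rewrite leqNgt; apply/negP => Hy.
  by apply: Hno; exists (n, k).
Qed.

End Ends.


Definition S0 : list GVert := [seq (0%:Z, k) | k <- zl 10].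

Lemma S0_iff v : List.In v S0 <-> v.1 = 0.
Proof.
rewrite In_mem; split.
- by case/mapP => k _ ->.
- by case: v => n k /= ->; apply: map_f; exact: zlP.
Qed.

Lemma S0_free m : m != 0 -> free (fun z => List.In z S0) m.
Proof. by move=> H k /S0_iff /= E; rewrite E eqxx in H. Qed.

Lemma S0_pos x y : CA (fun z => List.In z S0) x y -> 1 <= x.1 -> 1 <= y.1.
Proof.
elim=> [//|a b c _ IH bc nc] H.
have Hb := IH H.
have nc0 : c.1 != 0 by apply/eqP => E; apply: nc; apply/S0_iff.
move: nc0 Hb; case: (adj_layer bc) => [->|[->|->]]; lia.
Qed.

Lemma exist_part : exists (S : list GVert) (x y : GVert),
  in_inf_comp Gamma_adj S x /\ in_inf_comp Gamma_adj S y /\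
  ~ conn_avoid Gamma_adj (fun z => List.In z S) x y.
Proof.
exists S0, (1, 0), (-1, 0).
split; [|split].
- split; first by move/S0_iff.
  move=> [L HL].
  set M := (bnd L).+1.
  have P t : CA (fun z => List.In z S0) (1, 0) (1 + t%:Z, 0).
    elim: t => [|t IH]; first by rewrite addr0; apply: ca_refl; apply: S0_free.
    have -> : 1 + (t.+1)%:Z = 1 + t%:Z + 1 by lia.
    apply: ca_trans IH (ca_next _ _); apply: S0_free; lia.
  have := HL _ (P (bnd L)) => /bnd_ge /=. lia.
- split; first by move/S0_iff.
  move=> [L HL].
  have P t : CA (fun z => List.In z S0) (-1, 0) (-1 - t%:Z, 0).
    elim: t => [|t IH]; first by rewrite subr0; apply: ca_refl; apply: S0_free.
    have E : -1 - t%:Z = (-1 - (t.+1)%:Z) + 1 by lia.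
    apply: ca_trans IH _; rewrite E; apply: ca_sym; apply: ca_next; apply: S0_free; lia.
  have := HL _ (P (bnd L)) => /bnd_ge /=. lia.
- by move/S0_pos => /= /(_ erefl).
Qed.

Lemma two_endedG : two_ended Gamma_adj.
Proof.
split; first exact: connG.
split.
- exact: exist_part.
- move=> l x y z Hx Hy Hz.
  case: (inf_reach Hx) => Cx; case: (inf_reach Hy) => Cy; case: (inf_reach Hz) => Cz;
  first [ left; exact: ca_trans Cx (ca_sym Cy)
        | right; left; exact: ca_trans Cx (ca_sym Cz)
        | right; right; exact: ca_trans Cy (ca_sym Cz) ].
Qed.


Theorem theorem1p3 :
  (cubic Gamma_adj /\ two_ended Gamma_adj /\ vertex_transitive Gamma_adj /\
   ~ is_cayley_graph Gamma_adj) /\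
  (exists (V : Type) (adj : V -> V -> Prop),
     cubic adj /\ two_ended adj /\ vertex_transitive adj /\ ~ is_cayley_graph adj).
Proof.
have H : cubic Gamma_adj /\ two_ended Gamma_adj /\ vertex_transitive Gamma_adj /\
   ~ is_cayley_graph Gamma_adj.
  by split; [exact: cubicG | split; [exact: two_endedG | split; [exact: vtrans | exact: not_cayley]]].
split; first exact: H.
by exists GVert, Gamma_adj.
Qed.
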